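(* On the product manifold $\mathbb{R}\times\Sigma^2$ with metric $ds^2+d\rho^2+\tanh^2\rho\,d\theta^2$ ($s\in\mathbb{R}$, $(\rho,\theta)$ polar coordinates on $\Sigma^2$), the set of smooth functions $F$ with $\nabla\nabla F=\mathrm{Ric}$ and of at most linear growth ($|F(x)|\le C(1+d(x_0,x))$ for some $C$ and base point $x_0$) is exactly $$\{\,c_1+c_2s+2\ln\cosh\rho\;:\;c_1,c_2\in\mathbb{R}\,\}.$$
   Context: Hamilton's cigar $\Sigma^2$ is $\mathbb{R}^2$ with the metric $(dx^2+dy^2)/(1+x^2+y^2)$; in polar coordinates $(r,\theta)$ and with $\rho=\sinh^{-1}r$ this metric is $d\rho^2+\tanh^2\rho\,d\theta^2$, and $2\ln\cosh\rho$ is a Ricci potential of the cigar (its Hessian equals its Ricci tensor). A Ricci potential on a Riemannian manifold is a smooth function whose Hessian equals the Ricci tensor. *)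

(* Defs.v *)
From Stdlib Require Import Reals List.
From Coquelicot Require Import Coquelicot.
Open Scope R_scope.

(** The manifold R x Sigma^2 is R^3 with global coordinates p = (s, x, y):
    s in R, and (x, y) the Cartesian coordinates of the cigar
    Sigma^2 = (R^2, (dx^2+dy^2)/(1+x^2+y^2)). *)
Definition pt : Type := (R * R * R)%type.

Definition coord (i : nat) (p : pt) : R :=
  match i with
  | 0%nat => fst (fst p)
  | 1%nat => snd (fst p)
  | _ => snd p
  end.

Definition shift (i : nat) (h : R) (p : pt) : pt :=
  match i with
  | 0%nat => (fst (fst p) + h, snd (fst p), snd p)
  | 1%nat => (fst (fst p), snd (fst p) + h, snd p)
  | _ => (fst (fst p), snd (fst p), snd p + h)
  end.

Definition partial (i : nat) (F : pt -> R) : pt -> R :=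
  fun p => Derive (fun h => F (shift i h p)) 0.

Definition has_partial (i : nat) (F : pt -> R) : Prop :=
  forall p, ex_derive (fun h => F (shift i h p)) 0.

Definition iter_partial (l : list nat) (F : pt -> R) : pt -> R :=
  fold_right partial F l.

Definition smooth (F : pt -> R) : Prop :=
  forall l : list nat, (forall i, In i l -> (i < 3)%nat) ->
    (forall i, (i < 3)%nat -> has_partial i (iter_partial l F)) /\
    (forall p, continuous (iter_partial l F) p).

Definition sum3 (f : nat -> R) : R := f 0%nat + f 1%nat + f 2%nat.

Definition conf (p : pt) : R := / (1 + coord 1 p ^ 2 + coord 2 p ^ 2).

Definition g (p : pt) (i j : nat) : R :=
  if Nat.eqb i j then (match i with 0%nat => 1 | _ => conf p end) else 0.

Definition ginv (p : pt) (i j : nat) : R :=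
  if Nat.eqb i j then (match i with 0%nat => 1 | _ => / conf p end) else 0.

Definition Gamma (p : pt) (k i j : nat) : R :=
  / 2 * sum3 (fun l => ginv p k l *
     (partial i (fun q => g q j l) p + partial j (fun q => g q i l) p
      - partial l (fun q => g q i j) p)).

Definition Ric (p : pt) (i j : nat) : R :=
  sum3 (fun k => partial k (fun q => Gamma q k i j) p)
  - sum3 (fun k => partial j (fun q => Gamma q k i k) p)
  + sum3 (fun k => sum3 (fun l => Gamma p k k l * Gamma p l i j))
  - sum3 (fun k => sum3 (fun l => Gamma p k j l * Gamma p l i k)).

Definition Hess (F : pt -> R) (p : pt) (i j : nat) : R :=
  partial i (partial j F) p - sum3 (fun k => Gamma p k i j * partial k F p).

Definition C1_curve (gam : R -> pt) : Prop :=
  forall i, (i < 3)%nat ->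
    (forall t, ex_derive (fun u => coord i (gam u)) t) /\
    (forall t, 0 <= t <= 1 -> continuous (Derive (fun u => coord i (gam u))) t).

Definition curve_length (gam : R -> pt) : R :=
  RInt (fun t => sqrt (sum3 (fun i => sum3 (fun j =>
          g (gam t) i j * Derive (fun u => coord i (gam u)) t
                        * Derive (fun u => coord j (gam u)) t)))) 0 1.

Definition dist (p q : pt) : R :=
  real (Glb_Rbar (fun L => exists gam : R -> pt,
          C1_curve gam /\ gam 0 = p /\ gam 1 = q /\ L = curve_length gam)).

Definition linear_growth (F : pt -> R) : Prop :=
  exists (x0 : pt) (C : R), forall x, Rabs (F x) <= C * (1 + dist x0 x).

(* polar radius rho = arcsinh r on the cigar, r = sqrt(x^2+y^2) *)
Definition rho (p : pt) : R := arcsinh (sqrt (coord 1 p ^ 2 + coord 2 p ^ 2)).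

(* Main.v *)
Require Import Defs.
From Stdlib Require Import Reals Lra Lia List FunctionalExtensionality.
From Coquelicot Require Import Coquelicot.
Require Import Defs.
Open Scope R_scope.

Inductive ex : Type :=
| Cst (c : R) | Vs | Vx | Vy | Add (a b : ex) | Mul (a b : ex) | IW | LW.

Definition wv (p : pt) : R := 1 + coord 1 p ^ 2 + coord 2 p ^ 2.

Fixpoint eval (e : ex) (p : pt) : R :=
  match e with
  | Cst c => c
  | Vs => coord 0 p
  | Vx => coord 1 p
  | Vy => coord 2 p
  | Add a b => eval a p + eval b p
  | Mul a b => eval a p * eval b p
  | IW => conf p
  | LW => ln (wv p)
  end.

Definition dVs (i : nat) : R := match i with 0%nat => 1 | _ => 0 end.
Definition dVx (i : nat) : R := match i with 1%nat => 1 | _ => 0 end.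
Definition dVy (i : nat) : R := match i with 0%nat => 0 | 1%nat => 0 | _ => 1 end.

Definition dW (i : nat) : ex :=
  Add (Mul (Cst 2) (Mul Vx (Cst (dVx i)))) (Mul (Cst 2) (Mul Vy (Cst (dVy i)))).

Fixpoint d (i : nat) (e : ex) : ex :=
  match e with
  | Cst _ => Cst 0
  | Vs => Cst (dVs i)
  | Vx => Cst (dVx i)
  | Vy => Cst (dVy i)
  | Add a b => Add (d i a) (d i b)
  | Mul a b => Add (Mul (d i a) b) (Mul a (d i b))
  | IW => Mul (Cst (-1)) (Mul (Mul IW IW) (dW i))
  | LW => Mul IW (dW i)
  end.

Lemma wv_pos : forall p, 0 < wv p.
Proof. intros p; unfold wv; nra. Qed.

Lemma shift0 : forall i p, shift i 0 p = p.
Proof.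
  intros i [[s x] y]; destruct i as [|[|i]]; simpl; rewrite Rplus_0_r; reflexivity.
Qed.

Lemma is_derive_eval : forall e i p,
  is_derive (fun h => eval e (shift i h p)) 0 (eval (d i e) p).
Proof.
  induction e; intros i p; simpl.
  - auto_derive; auto.
  - destruct p as [[s x] y]; destruct i as [|[|i]]; simpl; auto_derive; auto; ring.
  - destruct p as [[s x] y]; destruct i as [|[|i]]; simpl; auto_derive; auto; ring.
  - destruct p as [[s x] y]; destruct i as [|[|i]]; simpl; auto_derive; auto; ring.
  - apply (is_derive_plus (fun h => eval e1 (shift i h p)) (fun h => eval e2 (shift i h p))); auto.
  - pose proof (is_derive_mult (fun h => eval e1 (shift i h p)) (fun h => eval e2 (shift i h p)) 0 _ _ (IHe1 i p) (IHe2 i p) (fun a b => Rmult_comm a b)) as H.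
    cbv beta in H. rewrite !shift0 in H. exact H.
  - pose proof (wv_pos p) as Hw. unfold conf, wv in *.
    destruct p as [[s x] y]; destruct i as [|[|i]]; simpl in *;
      auto_derive; try split; try lra; field; lra.
  - pose proof (wv_pos p) as Hw. unfold conf, wv in *.
    destruct p as [[s x] y]; destruct i as [|[|i]]; simpl in *;
      auto_derive; try split; try lra; field; lra.
Qed.

Lemma cont_coord : forall i p, continuous (coord i) p.
Proof.
  intros i [[s x] y]. destruct i as [|[|i]]; simpl.
  - apply (continuous_comp (fun p : pt => fst p) fst ((s,x),y)).
    apply continuous_fst. apply continuous_fst.
  - apply (continuous_comp (fun p : pt => fst p) snd ((s,x),y)).
    apply continuous_fst. apply continuous_snd.
  - apply continuous_snd.
Qed.

Lemma cont_wv : forall p, continuous wv p.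
Proof.
  intros p. unfold wv.
  apply (continuous_plus (fun q => 1 + coord 1 q ^ 2) (fun q => coord 2 q ^ 2)).
  apply (continuous_plus (fun q => 1) (fun q => coord 1 q ^ 2)).
  apply continuous_const.
  simpl. apply (continuous_mult (fun q => coord 1 q) (fun q => coord 1 q * 1)).
  apply cont_coord.
  apply (continuous_mult (fun q => coord 1 q) (fun q => 1)). apply cont_coord. apply continuous_const.
  simpl. apply (continuous_mult (fun q => coord 2 q) (fun q => coord 2 q * 1)).
  apply cont_coord.
  apply (continuous_mult (fun q => coord 2 q) (fun q => 1)). apply cont_coord. apply continuous_const.
Qed.

Lemma cont_eval : forall e p, continuous (eval e) p.
Proof.
  induction e; intros p; simpl.
  - apply continuous_const.
  - exact (cont_coord 0 p).
  - exact (cont_coord 1 p).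
  - exact (cont_coord 2 p).
  - apply (continuous_plus (eval e1) (eval e2)); auto.
  - apply (continuous_mult (eval e1) (eval e2)); auto.
  - unfold conf. apply (continuous_comp wv (fun u => / u)). apply cont_wv.
    apply continuous_Rinv. apply Rgt_not_eq, wv_pos.
  - apply (continuous_comp wv ln). apply cont_wv. apply continuous_ln, wv_pos.
Qed.

Lemma partial_eval : forall i e, partial i (eval e) = eval (d i e).
Proof.
  intros i e. apply functional_extensionality. intros p. unfold partial.
  apply is_derive_unique. apply is_derive_eval.
Qed.

Lemma has_partial_eval : forall i e, has_partial i (eval e).
Proof. intros i e p. eexists. apply is_derive_eval. Qed.

Lemma iter_partial_eval : forall l e,
  iter_partial l (eval e) = eval (fold_right d e l).
Proof.
  induction l; intros e; simpl. reflexivity.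
  change (partial a (iter_partial l (eval e)) = eval (d a (fold_right d e l))).
  rewrite IHl. apply partial_eval.
Qed.

Lemma smooth_eval : forall e, smooth (eval e).
Proof.
  intros e l _. rewrite iter_partial_eval. split.
  intros; apply has_partial_eval. intros; apply cont_eval.
Qed.

Definition Wx : ex := Add (Cst 1) (Add (Mul Vx Vx) (Mul Vy Vy)).
Definition gE (i j : nat) : ex :=
  if Nat.eqb i j then (match i with 0%nat => Cst 1 | _ => IW end) else Cst 0.
Definition ginvE (i j : nat) : ex :=
  if Nat.eqb i j then (match i with 0%nat => Cst 1 | _ => Wx end) else Cst 0.
Definition sum3E (f : nat -> ex) : ex := Add (Add (f 0%nat) (f 1%nat)) (f 2%nat).
Definition Sub (a b : ex) : ex := Add a (Mul (Cst (-1)) b).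

Definition GammaE (k i j : nat) : ex :=
  Mul (Cst (/2)) (sum3E (fun l => Mul (ginvE k l)
     (Sub (Add (d i (gE j l)) (d j (gE i l))) (d l (gE i j))))).

Definition RicE (i j : nat) : ex :=
  Add (Sub (sum3E (fun k => d k (GammaE k i j)))
           (sum3E (fun k => d j (GammaE k i k))))
      (Sub (sum3E (fun k => sum3E (fun l => Mul (GammaE k k l) (GammaE l i j))))
           (sum3E (fun k => sum3E (fun l => Mul (GammaE k j l) (GammaE l i k))))).

Definition HessE (e : ex) (i j : nat) : ex :=
  Sub (d i (d j e)) (sum3E (fun k => Mul (GammaE k i j) (d k e))).

Lemma g_eval : forall i j, (fun q => g q i j) = eval (gE i j).
Proof.
  intros i j; apply functional_extensionality; intros q.
  unfold g, gE. destruct (Nat.eqb i j); [destruct i|]; reflexivity.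
Qed.

Lemma ginv_eval : forall p i j, ginv p i j = eval (ginvE i j) p.
Proof.
  intros p i j. unfold ginv, ginvE. destruct (Nat.eqb i j); [destruct i|]; try reflexivity.
  simpl. unfold conf. rewrite Rinv_inv. simpl. ring.
Qed.

Lemma Gamma_eval : forall p k i j, Gamma p k i j = eval (GammaE k i j) p.
Proof.
  intros p k i j. unfold Gamma, GammaE, sum3, sum3E, Sub. cbn [eval].
  rewrite !g_eval, !partial_eval, !ginv_eval. ring.
Qed.

Lemma Gamma_fun : forall k i j, (fun q => Gamma q k i j) = eval (GammaE k i j).
Proof. intros; apply functional_extensionality; intros; apply Gamma_eval. Qed.

Lemma Ric_eval : forall p i j, Ric p i j = eval (RicE i j) p.
Proof.
  intros p i j. unfold Ric, RicE, sum3, sum3E, Sub. cbn [eval].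
  rewrite !Gamma_fun, !partial_eval, !Gamma_eval. ring.
Qed.

Lemma Hess_eval : forall e p i j, Hess (eval e) p i j = eval (HessE e i j) p.
Proof.
  intros e p i j. unfold Hess, HessE, sum3, sum3E, Sub. cbn [eval].
  rewrite !partial_eval, !Gamma_eval. ring.
Qed.

Definition FE (c1 c2 : R) : ex := Add (Add (Cst c1) (Mul (Cst c2) Vs)) LW.

Lemma Hess_Ric : forall c1 c2 p i j, (i < 3)%nat -> (j < 3)%nat ->
  eval (HessE (FE c1 c2) i j) p = eval (RicE i j) p.
Proof.
  intros c1 c2 p i j Hi Hj.
  pose proof (wv_pos p) as Hw.
  destruct p as [[s x] y]; unfold wv in Hw; simpl in Hw.
  destruct i as [|[|[|i]]]; try lia; destruct j as [|[|[|j]]]; try lia;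
  cbv [d dW FE HessE RicE GammaE sum3E Sub gE ginvE Wx Nat.eqb dVs dVx dVy]; cbn [eval];
  unfold conf, wv; simpl; field; lra.
Qed.

Section Curve.
Variable gam : R -> pt.
Hypothesis Hg : C1_curve gam.

Definition c (i : nat) (t : R) : R := coord i (gam t).
Definition D (i : nat) (t : R) : R := Derive (fun u => coord i (gam u)) t.

Definition Jint (t : R) : R :=
  sqrt (D 0 t ^ 2 + conf (gam t) * (D 1 t ^ 2 + D 2 t ^ 2)).

Lemma length_J : curve_length gam = RInt Jint 0 1.
Proof.
  unfold curve_length. apply RInt_ext. intros t _. unfold Jint.
  f_equal. unfold sum3, g, D. simpl. ring.
Qed.

Lemma cD : forall i t, (i < 3)%nat -> 0 <= t <= 1 -> continuous (D i) t.
Proof. intros i t Hi Ht. exact (proj2 (Hg i Hi) t Ht). Qed.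

Lemma cc : forall i t, (i < 3)%nat -> continuous (c i) t.
Proof. intros i t Hi. apply (@ex_derive_continuous R_AbsRing R_NormedModule (c i) t). exact (proj1 (Hg i Hi) t). Qed.

Lemma cconf : forall t, continuous (fun t => conf (gam t)) t.
Proof.
  intros t. unfold conf.
  apply (continuous_Rinv_comp (fun t => 1 + coord 1 (gam t) ^ 2 + coord 2 (gam t) ^ 2)).
  2: { pose proof (wv_pos (gam t)) as H. unfold wv in H. lra. }
  apply (continuous_plus (fun t => 1 + c 1 t ^ 2) (fun t => c 2 t ^ 2)).
  apply (continuous_plus (fun t => 1) (fun t => c 1 t ^ 2)).
  apply continuous_const.
  simpl. apply (continuous_mult (c 1) (fun t => c 1 t * 1)). apply cc; lia.
  apply (continuous_mult (c 1) (fun t => 1)). apply cc; lia. apply continuous_const.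
  simpl. apply (continuous_mult (c 2) (fun t => c 2 t * 1)). apply cc; lia.
  apply (continuous_mult (c 2) (fun t => 1)). apply cc; lia. apply continuous_const.
Qed.

Lemma sq_cont : forall (f : R -> R) t, continuous f t -> continuous (fun t => f t ^ 2) t.
Proof.
  intros f t H. simpl. apply (continuous_mult f (fun t => f t * 1)); auto.
  apply (continuous_mult f (fun t => 1)); auto. apply continuous_const.
Qed.

Lemma cJ : forall t, 0 <= t <= 1 -> continuous Jint t.
Proof.
  intros t Ht. unfold Jint. apply continuous_sqrt_comp.
  apply (continuous_plus (fun t => D 0 t ^ 2) (fun t => conf (gam t) * (D 1 t ^ 2 + D 2 t ^ 2))).
  apply sq_cont, cD; auto.
  apply (continuous_mult (fun t => conf (gam t)) (fun t => D 1 t ^ 2 + D 2 t ^ 2)).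
  apply cconf.
  apply (continuous_plus (fun t => D 1 t ^ 2) (fun t => D 2 t ^ 2)); apply sq_cont, cD; auto.
Qed.

Lemma exJ : ex_RInt Jint 0 1.
Proof.
  apply (@ex_RInt_continuous R_CompleteNormedModule). intros z Hz. rewrite Rmin_left, Rmax_right in Hz by lra.
  apply cJ; auto.
Qed.

Lemma int_bound (f : R -> R) :
  (forall t, ex_derive f t) ->
  (forall t, 0 <= t <= 1 -> continuous (Derive f) t) ->
  (forall t, Rabs (Derive f t) <= Jint t) ->
  Rabs (f 1 - f 0) <= RInt Jint 0 1.
Proof.
  intros H1 H2 H3.
  assert (E : RInt (Derive f) 0 1 = f 1 - f 0).
  { apply RInt_Derive. intros; apply H1. intros x Hx. rewrite Rmin_left, Rmax_right in Hx by lra. apply H2; auto. }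
  assert (exf : ex_RInt (Derive f) 0 1).
  { apply (@ex_RInt_continuous R_CompleteNormedModule). intros z Hz. rewrite Rmin_left, Rmax_right in Hz by lra. apply H2; auto. }
  assert (exo : ex_RInt (fun t => - Derive f t) 0 1).
  { apply ex_RInt_opp in exf. exact exf. }
  apply Rabs_le. split.
  - assert (RInt (fun t => - Derive f t) 0 1 <= RInt Jint 0 1).
    { apply RInt_le; auto. lra. apply exJ. intros t _. specialize (H3 t).
      apply Rabs_le_between in H3. lra. }
    assert (Hop : RInt (fun t => - Derive f t) 0 1 = - RInt (Derive f) 0 1).
    { exact (RInt_opp (Derive f) 0 1 exf). }
    lra.
  - rewrite <- E. apply RInt_le; auto. lra. apply exJ. intros t _. specialize (H3 t).
    apply Rabs_le_between in H3. lra.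
Qed.

Lemma bound_s : Rabs (coord 0 (gam 1) - coord 0 (gam 0)) <= curve_length gam.
Proof.
  rewrite length_J. apply (int_bound (c 0)).
  - intros; apply (proj1 (Hg 0%nat ltac:(lia))).
  - intros; apply cD; auto.
  - intros t. unfold Jint. rewrite <- sqrt_Rsqr_abs. apply sqrt_le_1_alt.
    pose proof (Rlt_le _ _ (Rinv_0_lt_compat _ (wv_pos (gam t)))).
    unfold conf. fold (wv (gam t)). unfold Rsqr. fold (D 0 t). unfold c. fold (D 0 t).
    assert (0 <= D 1 t ^ 2 + D 2 t ^ 2) by nra. nra.
Qed.

Definition phi (t : R) : R := ln (wv (gam t)) / 2.
Definition dphi (t : R) : R := (c 1 t * D 1 t + c 2 t * D 2 t) / wv (gam t).

Lemma is_derive_phi : forall t, is_derive phi t (dphi t).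
Proof.
  intros t. unfold phi, dphi.
  assert (H1 := Derive_correct _ _ (proj1 (Hg 1%nat ltac:(lia)) t)).
  assert (H2 := Derive_correct _ _ (proj1 (Hg 2%nat ltac:(lia)) t)).
  pose proof (wv_pos (gam t)) as Hw.
  unfold wv in *.
  change (fun u => coord 1 (gam u)) with (c 1) in H1.
  change (fun u => coord 2 (gam u)) with (c 2) in H2.
  fold (c 1 t) (c 2 t) in *.
  change (Derive (fun u => coord 1 (gam u)) t) with (D 1 t) in H1.
  change (Derive (fun u => coord 2 (gam u)) t) with (D 2 t) in H2.
  change (is_derive (fun t => ln (1 + c 1 t ^ 2 + c 2 t ^ 2) / 2) t
    ((c 1 t * D 1 t + c 2 t * D 2 t) / (1 + c 1 t ^ 2 + c 2 t ^ 2))).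
  auto_derive.
  - split; [exact (proj1 (Hg 1%nat ltac:(lia)) t)|].
    split; [exact (proj1 (Hg 2%nat ltac:(lia)) t)|].
    simpl in Hw. split; [lra|exact I].
  - unfold D, c in *. simpl in *.
    field. lra.
Qed.

Lemma bound_w : Rabs (phi 1 - phi 0) <= curve_length gam.
Proof.
  rewrite length_J. apply int_bound.
  - intros t; eexists; apply is_derive_phi.
  - intros t Ht. apply (continuous_ext dphi).
    { intros; symmetry; apply is_derive_unique, is_derive_phi. }
    unfold dphi. apply (continuous_mult (fun t => c 1 t * D 1 t + c 2 t * D 2 t) (fun t => / wv (gam t))).
    + apply (continuous_plus (fun t => c 1 t * D 1 t) (fun t => c 2 t * D 2 t)).
      apply (continuous_mult (c 1) (D 1)). apply cc; lia. apply cD; auto; lia.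
      apply (continuous_mult (c 2) (D 2)). apply cc; lia. apply cD; auto; lia.
    + apply (continuous_ext (fun t => conf (gam t))). intros; reflexivity. apply cconf.
  - intros t. rewrite (is_derive_unique _ _ _ (is_derive_phi t)). unfold Jint, dphi.
    pose proof (wv_pos (gam t)) as Hw.
    rewrite <- sqrt_Rsqr_abs. apply sqrt_le_1_alt.
    unfold conf. fold (wv (gam t)). unfold Rsqr.
    assert (Hc : c 1 t ^ 2 + c 2 t ^ 2 + 1 = wv (gam t)) by (unfold wv, c; ring).
    set (a := c 1 t) in *. set (b := c 2 t) in *. set (u := D 1 t). set (v := D 2 t).
    set (w := wv (gam t)) in *.
    assert (CS : (a * u + b * v) ^ 2 <= w * (u ^ 2 + v ^ 2)).
    { rewrite <- Hc. assert (0 <= (a*v - b*u)^2) by apply pow2_ge_0. assert (0 <= u^2) by apply pow2_ge_0. assert (0 <= v^2) by apply pow2_ge_0.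
      assert (E : (a^2+b^2+1)*(u^2+v^2) - (a*u+b*v)^2 = (a*v-b*u)^2 + (u^2+v^2)) by ring. lra. }
    assert (0 <= D 0 t ^ 2) by nra.
    replace ((a * u + b * v) / w * ((a * u + b * v) / w)) with ((a * u + b * v) ^ 2 / w / w) by (field; lra).
    replace (/ w * (u ^ 2 + v ^ 2)) with (w * (u ^ 2 + v ^ 2) / w / w) by (field; lra).
    assert ((a * u + b * v) ^ 2 / w / w <= w * (u ^ 2 + v ^ 2) / w / w).
    { unfold Rdiv. apply Rmult_le_compat_r. apply Rlt_le, Rinv_0_lt_compat; lra.
      apply Rmult_le_compat_r. apply Rlt_le, Rinv_0_lt_compat; lra. lra. }
    lra.
Qed.

End Curve.

Lemma cont_2d : forall (h : pt -> R) s x y, continuous h (s, x, y) ->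
  continuity_2d_pt (fun u v => h (s, u, v)) x y.
Proof.
  intros h s x y H eps.
  destruct (proj1 (filterlim_locally h (h (s,x,y))) H eps) as [delta Hd].
  exists delta. intros u v Hu Hv.
  assert (B : ball (s, x, y) delta (s, u, v)).
  { split; [split|]; simpl.
    - apply ball_center.
    - exact Hu.
    - exact Hv. }
  specialize (Hd _ B). exact Hd.
Qed.

Lemma Derive_trans : forall (k : R -> R) a, Derive (fun h => k (a + h)) 0 = Derive k a.
Proof.
  intros k a. unfold Derive. f_equal. apply Lim_ext. intros h.
  rewrite Rplus_0_l, Rplus_0_r. reflexivity.
Qed.

Lemma ex_derive_trans : forall (k : R -> R) a, ex_derive (fun h => k (a + h)) 0 -> ex_derive k a.
Proof.
  intros k a [l Hl]. exists (scal 1 l).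
  assert (Hl' : is_derive (fun h => k (a + h)) ((fun z => z - a) a) l).
  { replace ((fun z => z - a) a) with 0 by (simpl; ring). exact Hl. }
  assert (Hg : is_derive (fun z : R => z - a) a 1) by (auto_derive; auto; ring).
  assert (H := is_derive_comp (fun h => k (a + h)) (fun z => z - a) a l 1 Hl' Hg).
  eapply is_derive_ext; [|exact H]. intros t. simpl. f_equal. ring.
Qed.

Lemma schwarz12 : forall f s x y,
  has_partial 1 f -> has_partial 2 f ->
  has_partial 1 (partial 2 f) -> has_partial 2 (partial 1 f) ->
  continuous (partial 1 (partial 2 f)) (s, x, y) ->
  continuous (partial 2 (partial 1 f)) (s, x, y) ->
  partial 1 (partial 2 f) (s, x, y) = partial 2 (partial 1 f) (s, x, y).
Proof.
  intros f s x y H1 H2 H12 H21 C12 C21.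
  set (F2 := fun u v => f (s, u, v)).
  assert (E2 : forall u v, partial 2 f (s, u, v) = Derive (fun t => F2 u t) v).
  { intros u v. unfold partial. simpl. apply (Derive_trans (fun t => f (s, u, t))). }
  assert (E1 : forall u v, partial 1 f (s, u, v) = Derive (fun t => F2 t v) u).
  { intros u v. unfold partial. simpl. apply (Derive_trans (fun t => f (s, t, v))). }
  assert (E12 : forall u v, partial 1 (partial 2 f) (s, u, v) =
     Derive (fun z => Derive (fun t => F2 z t) v) u).
  { intros u v. unfold partial at 1. simpl.
    rewrite (Derive_trans (fun z => partial 2 f (s, z, v))).
    apply Derive_ext. intros; apply E2. }
  assert (E21 : forall u v, partial 2 (partial 1 f) (s, u, v) =
     Derive (fun z => Derive (fun t => F2 t z) u) v).
  { intros u v. unfold partial at 1. simpl.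
    rewrite (Derive_trans (fun z => partial 1 f (s, u, z))).
    apply Derive_ext. intros; apply E1. }
  rewrite E12, E21. apply Schwarz.
  - exists (mkposreal 1 Rlt_0_1). intros u v _ _. repeat split.
    + apply (ex_derive_trans (fun z => f (s, z, v))). exact (H1 (s, u, v)).
    + apply (ex_derive_trans (fun z => f (s, u, z))). exact (H2 (s, u, v)).
    + apply (ex_derive_ext (fun z => partial 2 f (s, z, v))). intros; apply E2.
      apply (ex_derive_trans (fun z => partial 2 f (s, z, v))). exact (H12 (s, u, v)).
    + apply (ex_derive_ext (fun z => partial 1 f (s, u, z))). intros; apply E1.
      apply (ex_derive_trans (fun z => partial 1 f (s, u, z))). exact (H21 (s, u, v)).
  - assert (Eq : (fun u v => Derive (fun z => Derive (fun t => F2 z t) v) u) =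
                 (fun u v => partial 1 (partial 2 f) (s, u, v))).
    { apply functional_extensionality; intros u; apply functional_extensionality; intros v.
      symmetry; apply E12. }
    rewrite Eq. apply cont_2d. exact C12.
  - assert (Eq : (fun u v => Derive (fun z => Derive (fun t => F2 t z) u) v) =
                 (fun u v => partial 2 (partial 1 f) (s, u, v))).
    { apply functional_extensionality; intros u; apply functional_extensionality; intros v.
      symmetry; apply E21. }
    rewrite Eq. apply cont_2d. exact C21.
Qed.

Lemma is_derive_trans : forall (k : R -> R) a l, is_derive (fun h => k (a + h)) 0 l -> is_derive k a l.
Proof.
  intros k a l Hl.
  assert (Hl' : is_derive (fun h => k (a + h)) ((fun z => z - a) a) l).
  { replace ((fun z => z - a) a) with 0 by (simpl; ring). exact Hl. }
  assert (Hg : is_derive (fun z : R => z - a) a 1) by (auto_derive; auto; ring).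
  assert (H := is_derive_comp (fun h => k (a + h)) (fun z => z - a) a l 1 Hl' Hg).
  replace l with (scal 1 l). eapply is_derive_ext; [|exact H]. intros t. simpl. f_equal. ring.
  exact (@scal_one R_AbsRing R_NormedModule l).
Qed.

Lemma shift_shift : forall i a h p, shift i h (shift i a p) = shift i (a + h) p.
Proof.
  intros i a h [[s x] y]; destruct i as [|[|i]]; simpl; rewrite Rplus_assoc; reflexivity.
Qed.

Lemma const_dir : forall f i p,
  (forall q, is_derive (fun h => f (shift i h q)) 0 0) -> forall h, f (shift i h p) = f p.
Proof.
  intros f i p H h.
  assert (D : forall t, is_derive (fun h => f (shift i h p)) t 0).
  { intros t. apply is_derive_trans. specialize (H (shift i t p)).
    eapply is_derive_ext; [|exact H]. intros u. simpl. rewrite shift_shift. reflexivity. }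
  rewrite <- (shift0 i p) at 2.
  destruct (Rtotal_order h 0) as [Hlt|[Heq|Hgt]].
  - refine (eq_is_derive (fun h => f (shift i h p)) h 0 _ Hlt). intros; apply D.
  - subst. reflexivity.
  - symmetry. refine (eq_is_derive (fun h => f (shift i h p)) 0 h _ Hgt). intros; apply D.
Qed.

Definition p0 : pt := (0, 0, 0).

Lemma const3 : forall f,
  (forall i q, (i < 3)%nat -> is_derive (fun h => f (shift i h q)) 0 0) -> forall p, f p = f p0.
Proof.
  intros f H [[s x] y].
  assert (H0 := const_dir f 0 (s, x, y) (fun q => H 0%nat q ltac:(lia)) (- s)).
  assert (H1 := const_dir f 1 (0, x, y) (fun q => H 1%nat q ltac:(lia)) (- x)).
  assert (H2 := const_dir f 2 (0, 0, y) (fun q => H 2%nat q ltac:(lia)) (- y)).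
  simpl in *. rewrite Rplus_opp_r in *. unfold p0. congruence.
Qed.

Lemma partial_minus_fun : forall i f h, has_partial i f -> has_partial i h ->
  partial i (fun q => f q - h q) = fun q => partial i f q - partial i h q.
Proof.
  intros i f h Hf Hh. apply functional_extensionality. intros q. unfold partial.
  apply (Derive_minus (fun t => f (shift i t q)) (fun t => h (shift i t q))); auto.
Qed.

Lemma partial_plus_fun : forall i f h, has_partial i f -> has_partial i h ->
  partial i (fun q => f q + h q) = fun q => partial i f q + partial i h q.
Proof.
  intros i f h Hf Hh. apply functional_extensionality. intros q. unfold partial.
  apply (Derive_plus (fun t => f (shift i t q)) (fun t => h (shift i t q))); auto.
Qed.

Lemma partial_mult_fun : forall i f h, has_partial i f -> has_partial i h ->
  partial i (fun q => f q * h q) = fun q => partial i f q * h q + f q * partial i h q.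
Proof.
  intros i f h Hf Hh. apply functional_extensionality. intros q. unfold partial.
  rewrite (Derive_mult (fun t => f (shift i t q)) (fun t => h (shift i t q))); auto.
  rewrite shift0. reflexivity.
Qed.

Lemma has_partial_minus : forall i f h, has_partial i f -> has_partial i h ->
  has_partial i (fun q => f q - h q).
Proof. intros i f h Hf Hh q. apply (ex_derive_minus (fun t => f (shift i t q)) (fun t => h (shift i t q))); auto. Qed.

Lemma has_partial_plus : forall i f h, has_partial i f -> has_partial i h ->
  has_partial i (fun q => f q + h q).
Proof. intros i f h Hf Hh q. apply (ex_derive_plus (fun t => f (shift i t q)) (fun t => h (shift i t q))); auto. Qed.

Lemma has_partial_mult : forall i f h, has_partial i f -> has_partial i h ->
  has_partial i (fun q => f q * h q).
Proof. intros i f h Hf Hh q. apply (ex_derive_mult (fun t => f (shift i t q)) (fun t => h (shift i t q))); auto. Qed.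



Lemma line_C1 : forall q : pt, C1_curve (fun t => (t * fst (fst q), t * snd (fst q), t * snd q)).
Proof.
  intros [[s x] y] i Hi. simpl.
  assert (E : forall a : R, Derive (fun v => v * a) = fun _ => a).
  { intros a. apply functional_extensionality. intros u. apply is_derive_unique.
    auto_derive; auto; ring. }
  destruct i as [|[|[|i]]]; try lia; simpl; split; intros t;
    [auto_derive; auto | intros; rewrite (E s); apply continuous_const
    |auto_derive; auto | intros; rewrite (E x); apply continuous_const
    |auto_derive; auto | intros; rewrite (E y); apply continuous_const].
Qed.

Lemma curve_bounds : forall q gam, C1_curve gam -> gam 0 = p0 -> gam 1 = q ->
  Rabs (coord 0 q) <= curve_length gam /\ ln (wv q) <= 2 * curve_length gam.
Proof.
  intros q gam Hg H0 H1. split.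
  - pose proof (bound_s gam Hg) as H. rewrite H0, H1 in H. simpl in H.
    rewrite Rminus_0_r in H. exact H.
  - pose proof (bound_w gam Hg) as H. unfold phi in H. rewrite H0, H1 in H.
    unfold wv at 2 in H. simpl in H.
    replace (1 + 0 * (0 * 1) + 0 * (0 * 1)) with 1 in H by ring. rewrite ln_1 in H.
    apply Rabs_le_between in H. lra.
Qed.

Lemma dist_bounds : forall q,
  Rabs (coord 0 q) <= dist p0 q /\ ln (wv q) <= 2 * dist p0 q /\ 0 <= dist p0 q.
Proof.
  intros q.
  set (E := fun L => exists gam : R -> pt,
          C1_curve gam /\ gam 0 = p0 /\ gam 1 = q /\ L = curve_length gam).
  set (B := Rmax (Rabs (coord 0 q)) (ln (wv q) / 2)).
  assert (HB0 : 0 <= B). { unfold B. apply Rle_trans with (Rabs (coord 0 q)). apply Rabs_pos. apply Rmax_l. }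
  assert (Hlb : forall L, E L -> B <= L).
  { intros L [gam [Hg [H0 [H1 ->]]]]. destruct (curve_bounds q gam Hg H0 H1).
    unfold B. apply Rmax_lub; lra. }
  set (gl := fun t => (t * fst (fst q), t * snd (fst q), t * snd q)).
  assert (HE : E (curve_length gl)).
  { exists gl. split. apply line_C1. split.
    - unfold gl, p0. rewrite !Rmult_0_l. reflexivity.
    - split; [|reflexivity]. unfold gl. rewrite !Rmult_1_l. destruct q as [[s x] y]. reflexivity. }
  assert (Hd : B <= dist p0 q).
  { unfold dist. fold E. destruct (Glb_Rbar_correct E) as [Hl Hg].
    assert (H1 : Rbar_le B (Glb_Rbar E)). { apply Hg. intros x Hx. simpl. apply Hlb; auto. }
    assert (H2 : Rbar_le (Glb_Rbar E) (curve_length gl)). { apply Hl; auto. }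
    destruct (Glb_Rbar E); simpl in *; auto; contradiction. }
  unfold B in Hd, HB0.
  assert (Rabs (coord 0 q) <= Rmax (Rabs (coord 0 q)) (ln (wv q) / 2)) by apply Rmax_l.
  assert (ln (wv q) / 2 <= Rmax (Rabs (coord 0 q)) (ln (wv q) / 2)) by apply Rmax_r.
  repeat split; lra.
Qed.

Definition XE : ex := Mul (Cst (-1)) (Mul Vx IW).
Definition YE : ex := Mul (Cst (-1)) (Mul Vy IW).

Section Fwd.
Variable F : pt -> R.
Hypothesis HF : smooth F.
Hypothesis HR : forall p i j, (i < 3)%nat -> (j < 3)%nat -> Hess F p i j = Ric p i j.

Definition G0 : pt -> R := eval (FE 0 0).
Definition E : pt -> R := fun q => F q - G0 q.

Lemma iterE : forall l, (forall i, In i l -> (i < 3)%nat) ->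
  iter_partial l E = fun q => iter_partial l F q - iter_partial l G0 q.
Proof.
  induction l as [|a l IH]; intros Hl; simpl. reflexivity.
  rewrite IH by (intros; apply Hl; simpl; auto).
  apply partial_minus_fun.
  - apply (proj1 (HF l ltac:(intros; apply Hl; simpl; auto))). apply Hl; simpl; auto.
  - unfold G0. rewrite iter_partial_eval. apply has_partial_eval.
Qed.

Lemma hasE : forall l i, (forall i, In i l -> (i < 3)%nat) -> (i < 3)%nat ->
  has_partial i (iter_partial l E).
Proof.
  intros l i Hl Hi. rewrite iterE by auto. apply has_partial_minus.
  - apply (proj1 (HF l Hl)); auto.
  - unfold G0. rewrite iter_partial_eval. apply has_partial_eval.
Qed.

Lemma contE : forall l p, (forall i, In i l -> (i < 3)%nat) -> continuous (iter_partial l E) p.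
Proof.
  intros l p Hl. rewrite iterE by auto.
  apply (continuous_minus (iter_partial l F) (iter_partial l G0)).
  - apply (proj2 (HF l Hl)).
  - unfold G0. rewrite iter_partial_eval. apply cont_eval.
Qed.

Lemma HessE0 : forall p i j, (i < 3)%nat -> (j < 3)%nat -> Hess E p i j = 0.
Proof.
  intros p i j Hi Hj.
  assert (HG : Hess G0 p i j = Ric p i j).
  { unfold G0. rewrite Hess_eval, Ric_eval. apply Hess_Ric; auto. }
  assert (E1 : forall k, (k < 3)%nat -> partial k E p = partial k F p - partial k G0 p).
  { intros k Hk. exact (f_equal (fun f => f p) (iterE (k :: nil) ltac:(intros ? [->|[]]; auto))). }
  assert (E2 : partial i (partial j E) p = partial i (partial j F) p - partial i (partial j G0) p).
  { exact (f_equal (fun f => f p) (iterE (i :: j :: nil) ltac:(intros ? [->|[->|[]]]; auto))). }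
  pose proof (HR p i j Hi Hj) as H. unfold Hess in *. unfold sum3 in *.
  rewrite E2, !E1 by lia. lra.
Qed.

Definition Xf := eval XE.
Definition Yf := eval YE.

Ltac hess_eq i j :=
  intros p; pose proof (HessE0 p i j ltac:(lia) ltac:(lia)) as H;
  unfold Hess, sum3 in H; rewrite !Gamma_eval in H;
  unfold Xf, Yf;
  cbv [GammaE sum3E Sub gE ginvE Wx d dW dVs dVx dVy Nat.eqb XE YE] in *; cbn [eval] in *;
  pose proof (wv_pos p) as Hw;
  destruct p as [[s x] y]; unfold conf, wv in *; simpl in *;
  match type of H with _ - ?S = 0 =>
    match goal with |- _ = ?B => assert (S = B) by (field; lra) end end; lra.

Lemma h00 : forall p, partial 0 (partial 0 E) p = 0.
Proof. hess_eq 0%nat 0%nat. Qed.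
Lemma h10 : forall p, partial 1 (partial 0 E) p = 0.
Proof. hess_eq 1%nat 0%nat. Qed.
Lemma h20 : forall p, partial 2 (partial 0 E) p = 0.
Proof. hess_eq 2%nat 0%nat. Qed.
Lemma h11 : forall p, partial 1 (partial 1 E) p = Xf p * partial 1 E p - Yf p * partial 2 E p.
Proof. hess_eq 1%nat 1%nat. Qed.
Lemma h21 : forall p, partial 2 (partial 1 E) p = Yf p * partial 1 E p + Xf p * partial 2 E p.
Proof. hess_eq 2%nat 1%nat. Qed.
Lemma h12 : forall p, partial 1 (partial 2 E) p = Yf p * partial 1 E p + Xf p * partial 2 E p.
Proof. hess_eq 1%nat 2%nat. Qed.
Lemma h22 : forall p, partial 2 (partial 2 E) p = - Xf p * partial 1 E p + Yf p * partial 2 E p.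
Proof. hess_eq 2%nat 2%nat. Qed.


Lemma hpX : forall i, has_partial i Xf. Proof. intros; apply has_partial_eval. Qed.
Lemma hpY : forall i, has_partial i Yf. Proof. intros; apply has_partial_eval. Qed.

Ltac inlist := let i := fresh in let H := fresh in intros i H; simpl in H; intuition lia.

Lemma Q0 : forall p, partial 2 E p = 0.
Proof.
  intros [[s x] y].
  pose proof (hasE (1%nat :: nil) 1 ltac:(inlist) ltac:(lia)) as hP1.
  pose proof (hasE (1%nat :: nil) 2 ltac:(inlist) ltac:(lia)) as hP2.
  pose proof (hasE (2%nat :: nil) 1 ltac:(inlist) ltac:(lia)) as hQ1.
  pose proof (hasE (2%nat :: nil) 2 ltac:(inlist) ltac:(lia)) as hQ2.
  pose proof (hasE (2%nat :: 1%nat :: nil) 1 ltac:(inlist) ltac:(lia)) as hP21.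
  pose proof (hasE (1%nat :: 1%nat :: nil) 2 ltac:(inlist) ltac:(lia)) as hP12.
  pose proof (contE (1%nat :: 2%nat :: 1%nat :: nil) (s, x, y) ltac:(inlist)) as c1.
  pose proof (contE (2%nat :: 1%nat :: 1%nat :: nil) (s, x, y) ltac:(inlist)) as c2.
  simpl in hP1, hP2, hQ1, hQ2, hP21, hP12, c1, c2.
  pose proof (schwarz12 (partial 1 E) s x y hP1 hP2 hP21 hP12 c1 c2) as Sch.
  set (P := partial 1 E) in *. set (Q := partial 2 E) in *.
  assert (e1 : partial 1 P = fun q => Xf q * P q - Yf q * Q q).
  { apply functional_extensionality; intros; apply h11. }
  assert (e2 : partial 2 P = fun q => Yf q * P q + Xf q * Q q).
  { apply functional_extensionality; intros; apply h21. }
  rewrite e1, e2 in Sch.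
  rewrite partial_plus_fun, partial_minus_fun in Sch
    by (apply has_partial_mult; auto using hpX, hpY).
  rewrite !partial_mult_fun in Sch by auto using hpX, hpY.
  cbv beta in Sch.
  rewrite e1, e2 in Sch.
  rewrite h12 in Sch. fold P Q in Sch.
  rewrite h22 in Sch. fold P Q in Sch.
  unfold Xf, Yf in Sch. rewrite !partial_eval in Sch.
  cbv [XE YE d dW dVs dVx dVy] in Sch. cbn [eval] in Sch.
  pose proof (wv_pos (s, x, y)) as Hw.
  unfold conf, wv in *. simpl in *.
  set (a := P (s, x, y)) in *. set (b := Q (s, x, y)) in *.
  match type of Sch with ?LL = ?RR =>
    assert (Hb : @eq R (b * (2 / ((1 + x * (x * 1) + y * (y * 1)) * (1 + x * (x * 1) + y * (y * 1))))) (RR - LL))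
      by (field; lra) end.
  rewrite Sch, Rminus_diag_eq in Hb by reflexivity.
  apply Rmult_integral in Hb. destruct Hb as [Hb|Hb]; auto.
  exfalso. unfold Rdiv in Hb. apply Rmult_integral in Hb. destruct Hb as [Hb|Hb]. lra.
  revert Hb. apply Rinv_neq_0_compat. nra.
Qed.


Lemma P0 : forall p, partial 1 E p = 0.
Proof.
  intros [[s x] y].
  pose proof (hasE (1%nat :: nil) 1 ltac:(inlist) ltac:(lia)) as hP1.
  pose proof (hasE (1%nat :: nil) 2 ltac:(inlist) ltac:(lia)) as hP2.
  pose proof (hasE (2%nat :: nil) 1 ltac:(inlist) ltac:(lia)) as hQ1.
  pose proof (hasE (2%nat :: nil) 2 ltac:(inlist) ltac:(lia)) as hQ2.
  pose proof (hasE (2%nat :: 2%nat :: nil) 1 ltac:(inlist) ltac:(lia)) as hQ21.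
  pose proof (hasE (1%nat :: 2%nat :: nil) 2 ltac:(inlist) ltac:(lia)) as hQ12.
  pose proof (contE (1%nat :: 2%nat :: 2%nat :: nil) (s, x, y) ltac:(inlist)) as c1.
  pose proof (contE (2%nat :: 1%nat :: 2%nat :: nil) (s, x, y) ltac:(inlist)) as c2.
  simpl in hP1, hP2, hQ1, hQ2, hQ21, hQ12, c1, c2.
  pose proof (schwarz12 (partial 2 E) s x y hQ1 hQ2 hQ21 hQ12 c1 c2) as Sch.
  set (P := partial 1 E) in *. set (Q := partial 2 E) in *.
  assert (e1 : partial 1 Q = fun q => Yf q * P q + Xf q * Q q).
  { apply functional_extensionality; intros; apply h12. }
  assert (e2 : partial 2 Q = fun q => Yf q * Q q - Xf q * P q).
  { apply functional_extensionality; intros q. unfold Q. rewrite h22. fold P Q. ring. }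
  rewrite e1, e2 in Sch.
  rewrite partial_plus_fun, partial_minus_fun in Sch
    by (apply has_partial_mult; auto using hpX, hpY).
  rewrite !partial_mult_fun in Sch by auto using hpX, hpY.
  cbv beta in Sch.
  rewrite e1, e2 in Sch.
  rewrite h11 in Sch. fold P Q in Sch.
  rewrite h21 in Sch. fold P Q in Sch.
  unfold Xf, Yf in Sch. rewrite !partial_eval in Sch.
  cbv [XE YE d dW dVs dVx dVy] in Sch. cbn [eval] in Sch.
  pose proof (wv_pos (s, x, y)) as Hw.
  unfold conf, wv in *. simpl in *.
  set (a := P (s, x, y)) in *. set (b := Q (s, x, y)) in *.
  match type of Sch with ?LL = ?RR =>
    assert (Hb : @eq R (a * (2 / ((1 + x * (x * 1) + y * (y * 1)) * (1 + x * (x * 1) + y * (y * 1))))) (LL - RR))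
      by (field; lra) end.
  rewrite Sch, Rminus_diag_eq in Hb by reflexivity.
  apply Rmult_integral in Hb. destruct Hb as [Hb|Hb]; auto.
  exfalso. unfold Rdiv in Hb. apply Rmult_integral in Hb. destruct Hb as [Hb|Hb]. lra.
  revert Hb. apply Rinv_neq_0_compat. nra.
Qed.


Lemma fwd : exists c1 c2, forall p, F p = c1 + c2 * coord 0 p + ln (wv p).
Proof.
  set (c2 := partial 0 E p0).
  assert (HK : forall p, partial 0 E p = c2).
  { apply const3. intros i q Hi.
    pose proof (Derive_correct _ _ (hasE (0%nat :: nil) i ltac:(inlist) Hi q)) as H.
    change (iter_partial (0%nat :: nil) E) with (partial 0 E) in H.
    change (is_derive (fun h => partial 0 E (shift i h q)) 0 (partial i (partial 0 E) q)) in H.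
    assert (Z : partial i (partial 0 E) q = 0).
    { destruct i as [|[|[|i]]]; try lia; [apply h00|apply h10|apply h20]. }
    rewrite Z in H. exact H. }
  set (E' := fun q => E q - eval (Mul (Cst c2) Vs) q).
  assert (hE : forall i, (i < 3)%nat -> has_partial i E).
  { intros i Hi. exact (hasE nil i ltac:(inlist) Hi). }
  assert (HE' : forall p, E' p = E' p0).
  { apply const3. intros i q Hi.
    assert (Hp : has_partial i E') by (apply has_partial_minus; auto using has_partial_eval).
    pose proof (Derive_correct _ _ (Hp q)) as H.
    change (is_derive (fun h => E' (shift i h q)) 0 (partial i E' q)) in H.
    assert (Z : partial i E' q = 0).
    { unfold E'. rewrite partial_minus_fun by auto using has_partial_eval.
      rewrite partial_eval. cbn [d eval].
      destruct i as [|[|[|i]]]; try lia; simpl.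
      - rewrite HK. ring.
      - rewrite P0. ring.
      - rewrite Q0. ring. }
    rewrite Z in H. exact H. }
  exists (E' p0), c2. intros p. rewrite <- (HE' p). unfold E', E, G0, FE. cbn [eval]. ring.
Qed.

End Fwd.

Lemma cosh_rho : forall p, 2 * ln (cosh (rho p)) = ln (wv p).
Proof.
  intros p. unfold rho, wv, arcsinh, cosh.
  set (t := sqrt (coord 1 p ^ 2 + coord 2 p ^ 2)).
  assert (Ht : 0 <= t) by apply sqrt_pos.
  assert (Ht2 : t ^ 2 = coord 1 p ^ 2 + coord 2 p ^ 2).
  { unfold t. rewrite pow2_sqrt; auto. nra. }
  set (S := sqrt (t ^ 2 + 1)).
  assert (HS : 0 < S) by (apply sqrt_lt_R0; nra).
  assert (HS2 : S ^ 2 = t ^ 2 + 1) by (unfold S; rewrite pow2_sqrt; nra).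
  assert (Hu : 0 < t + S) by lra.
  rewrite exp_Ropp, exp_ln by exact Hu.
  assert (Hinv : / (t + S) = S - t).
  { field_simplify_eq; [nra | lra]. }
  rewrite Hinv. replace ((t + S + (S - t)) / 2) with S by field.
  replace (1 + coord 1 p ^ 2 + coord 2 p ^ 2) with (S * S) by nra.
  rewrite ln_mult by lra. ring.
Qed.


Theorem theorem3p4 : forall F : pt -> R,
  (smooth F /\
   (forall p i j, (i < 3)%nat -> (j < 3)%nat -> Hess F p i j = Ric p i j) /\
   linear_growth F)
  <->
  (exists c1 c2 : R, forall p : pt,
     F p = c1 + c2 * coord 0 p + 2 * ln (cosh (rho p))).
Proof.
  intros F. split.
  - intros [HF [HR _]]. destruct (fwd F HF HR) as [c1 [c2 H]].
    exists c1, c2. intros p. rewrite H, cosh_rho. reflexivity.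
  - intros [c1 [c2 H]].
    assert (EF : F = eval (FE c1 c2)).
    { apply functional_extensionality. intros p. rewrite H, cosh_rho. reflexivity. }
    subst F. split; [|split].
    + apply smooth_eval.
    + intros p i j Hi Hj. rewrite Hess_eval, Ric_eval. apply Hess_Ric; auto.
    + exists p0, (Rabs c1 + Rabs c2 + 2). intros q.
      destruct (dist_bounds q) as [Hs [Hl Hd]].
      cbn [eval FE].
      assert (Hw1 : 0 <= ln (wv q)).
      { rewrite <- ln_1. apply ln_le. lra. unfold wv. nra. }
      set (d := dist p0 q) in *.
      assert (R1 : Rabs (c1 + c2 * coord 0 q + ln (wv q)) <= Rabs c1 + Rabs c2 * Rabs (coord 0 q) + ln (wv q)).
      { rewrite <- (Rabs_pos_eq (ln (wv q))) at 2 by exact Hw1. rewrite <- Rabs_mult.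
        eapply Rle_trans. apply Rabs_triang. apply Rplus_le_compat_r. apply Rabs_triang. }
      assert (R2 : Rabs c2 * Rabs (coord 0 q) <= Rabs c2 * d).
      { apply Rmult_le_compat_l. apply Rabs_pos. exact Hs. }
      pose proof (Rabs_pos c1). pose proof (Rabs_pos c2). nra.
Qed.
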